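(* Let $u$ be the exact solution of $\dot u=f(u,t)$, $t\in(0,T]$, $u(0)=u_0$, and let $U$ be a piecewise polynomial approximation of $u$ ($U_i|_{I_{ij}}$ a polynomial for each $i,j$, with the convention $U_i(0^-)=u_i(0)$), right-continuous at $T$, with $e=U-u$ and $e(T)\ne0$. Let $\varphi$ solve the dual problem $-\dot\varphi=J^*(u,U,\cdot)\varphi$ on $[0,T)$ with $\varphi(T)=e(T)/\|e(T)\|$ (i.e. $g=0$). Then $$\|e(T)\|=\sum_{i=1}^N\sum_{j=1}^{M_i}\Big[\int_{I_{ij}}R_i(U,\cdot)\varphi_i\,dt+[U_i]_{i,j-1}\varphi_i(t_{i,j-1})\Big],$$ where $R_i(U,t)=\dot U_i(t)-f_i(U(t),t)$ on $(t_{i,j-1},t_{ij})$.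
   Context: $f:\mathbb{R}^N\times(0,T]\to\mathbb{R}^N$ is bounded, Lipschitz and continuously differentiable in $u$; $\|\cdot\|$ is the Euclidean norm. For each component $i$ there is a partition $0=t_{i0}<\dots<t_{iM_i}=T$ with $I_{ij}=(t_{i,j-1},t_{ij}]$; jumps are $[U_i]_{ij}=U_i(t_{ij}^+)-U_i(t_{ij}^-)$. $J^*(v_1,v_2,t)=\big(\int_0^1\frac{\partial f}{\partial u}(s v_1+(1-s)v_2,t)\,ds\big)^{*}$ with $^*$ the transpose. *)

(* Defs.v *)
From Stdlib Require Import Reals Lra.
From Coquelicot Require Import Coquelicot.
Open Scope R_scope.

(* Vectors in R^N are represented as functions nat -> R; only the
   components 0..N-1 are meaningful (components are numbered from 0,
   the paper numbers them 1..N). *)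
Definition vec := nat -> R.

Fixpoint sumR (n : nat) (F : nat -> R) : R :=
  match n with
  | O => 0
  | S m => sumR m F + F m
  end.

Definition vnorm (N : nat) (v : vec) : R := sqrt (sumR N (fun i => (v i) ^ 2)).

Definition vsub (v w : vec) : vec := fun i => v i - w i.

Definition vcomb (s : R) (v1 v2 : vec) : vec := fun i => s * v1 i + (1 - s) * v2 i.

Definition vupd (v : vec) (k : nat) (x : R) : vec :=
  fun m => if Nat.eqb m k then x else v m.

Definition pdf (f : vec -> R -> vec) (i k : nat) (v : vec) (t : R) : R :=
  Derive (fun x => f (vupd v k x) t i) (v k).

(* J^*(v1,v2,t)_{ik} = ( int_0^1 df/du (s v1 + (1-s) v2, t) ds )^T_{ik}
                     = int_0^1 d f_k / d u_i (s v1 + (1-s) v2, t) ds *)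
Definition Jstar (f : vec -> R -> vec) (v1 v2 : vec) (t : R) (i k : nat) : R :=
  RInt (fun s => pdf f k i (vcomb s v1 v2) t) 0 1.

(* polynomials given by their coefficient list [c0; c1; ...] (Horner evaluation) *)
Fixpoint peval (p : list R) (t : R) : R :=
  match p with
  | nil => 0
  | cons c q => c + t * peval q t
  end.

Definition f_bounded (N : nat) (T : R) (f : vec -> R -> vec) : Prop :=
  exists B, forall v t, 0 < t <= T -> vnorm N (f v t) <= B.

Definition f_lipschitz (N : nat) (T : R) (f : vec -> R -> vec) : Prop :=
  exists L, forall v w t s, 0 < t <= T -> 0 < s <= T ->
    vnorm N (vsub (f v t) (f w s)) <= L * (vnorm N (vsub v w) + Rabs (t - s)).

Definition f_C1_in_u (N : nat) (T : R) (f : vec -> R -> vec) : Prop :=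
  (forall v t i k, 0 < t <= T -> (i < N)%nat -> (k < N)%nat ->
     ex_derive (fun x => f (vupd v k x) t i) (v k)) /\
  (forall v t i k, 0 < t <= T -> (i < N)%nat -> (k < N)%nat ->
     forall eps, 0 < eps -> exists delta, 0 < delta /\
       forall w s, 0 < s <= T -> vnorm N (vsub w v) < delta -> Rabs (s - t) < delta ->
         Rabs (pdf f i k w s - pdf f i k v t) < eps).

Definition cont_on_0T (T : R) (g : R -> R) : Prop :=
  forall t, 0 <= t <= T ->
    filterlim g (within (fun s => 0 <= s <= T) (locally t)) (locally (g t)).

Definition is_node (N : nat) (M : nat -> nat) (tt : nat -> nat -> R) (t : R) : Prop :=
  exists k j, (k < N)%nat /\ (j <= M k)%nat /\ t = tt k j.

(* jump [U_i]_{i,j-1} = U_i(t_{i,j-1}^+) - U_i(t_{i,j-1}^-), for 1 <= j <= M_i,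
   where U_i = P i j on I_{ij}; so U_i(t_{i,j-1}^+) = (P i j)(t_{i,j-1}),
   U_i(t_{i,j-1}^-) = (P i (j-1))(t_{i,j-1}) for j >= 2, and for j = 1 the
   convention U_i(0^-) = u_i(0) is used. *)
Definition jump_prev (P : nat -> nat -> list R) (tt : nat -> nat -> R) (u0 : vec)
    (i j : nat) : R :=
  peval (P i j) (tt i (j - 1)%nat)
  - (if Nat.eqb j 1 then u0 i else peval (P i (j - 1)%nat) (tt i (j - 1)%nat)).

(* Main.v *)
Require Import Defs.
From Stdlib Require Import Reals.
From Coquelicot Require Import Coquelicot.
From Stdlib Require Import Lra Lia List FunctionalExtensionality.
Open Scope R_scope.


Lemma sumR_ext n F G : (forall i, (i<n)%nat -> F i = G i) -> sumR n F = sumR n G.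
Proof. induction n; simpl; intros H; auto. rewrite IHn by (intros; apply H; lia). rewrite H by lia; auto. Qed.

Lemma sumR_plus n F G : sumR n (fun i => F i + G i) = sumR n F + sumR n G.
Proof. induction n; simpl; [lra|]. rewrite IHn; lra. Qed.

Lemma sumR_minus n F G : sumR n (fun i => F i - G i) = sumR n F - sumR n G.
Proof. induction n; simpl; [lra|]. rewrite IHn; lra. Qed.

Lemma sumR_scal n c F : sumR n (fun i => c * F i) = c * sumR n F.
Proof. induction n; simpl; [lra|]. rewrite IHn; lra. Qed.

Lemma sumR_zero n : sumR n (fun _ => 0) = 0.
Proof. induction n; simpl; lra. Qed.

Lemma sumR_const n m : sumR n (fun _ => m) = INR n * m.
Proof. induction n; simpl sumR; [simpl; lra|]. rewrite IHn, S_INR; lra. Qed.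

Lemma sumR_swap n m F : sumR n (fun i => sumR m (fun k => F i k)) = sumR m (fun k => sumR n (fun i => F i k)).
Proof. induction n; simpl. - rewrite sumR_zero; auto. - rewrite IHn, <- sumR_plus. reflexivity. Qed.

Lemma sumR_telescope n F : sumR n (fun i => F (S i) - F i) = F n - F 0%nat.
Proof. induction n; simpl; [lra|]. rewrite IHn; lra. Qed.

Lemma sumR_le n F G : (forall i, (i<n)%nat -> F i <= G i) -> sumR n F <= sumR n G.
Proof. induction n; simpl; intros H; [lra|]. assert (H1 := H n ltac:(lia)). assert (sumR n F <= sumR n G) by (apply IHn; intros; apply H; lia). lra. Qed.

Lemma sumR_nonneg n F : (forall i, (i<n)%nat -> 0 <= F i) -> 0 <= sumR n F.
Proof. intros H. rewrite <- (sumR_zero n). apply sumR_le. auto. Qed.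

Lemma sumR_ge_term n F i : (forall k, (k<n)%nat -> 0 <= F k) -> (i<n)%nat -> F i <= sumR n F.
Proof. induction n; simpl; intros H Hi; [lia|].
  assert (0 <= sumR n F) by (apply sumR_nonneg; intros; apply H; lia).
  destruct (Nat.eq_dec i n). - subst. lra.
  - assert (F i <= sumR n F) by (apply IHn; [intros; apply H; lia| lia]). assert (0 <= F n) by (apply H; lia). lra. Qed.

Lemma sumR_abs n F : Rabs (sumR n F) <= sumR n (fun i => Rabs (F i)).
Proof. induction n; simpl. - rewrite Rabs_R0; lra. - eapply Rle_trans; [apply Rabs_triang|]. lra. Qed.

Lemma sumR_delta n J x : (J < n)%nat -> sumR n (fun j => if Nat.eqb j J then x else 0) = x.
Proof. induction n; simpl; intros H; [lia|].
  destruct (Nat.eq_dec J n).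
  - subst. rewrite Nat.eqb_refl. rewrite (sumR_ext n _ (fun _ => 0)). rewrite sumR_zero; lra.
    intros i Hi. destruct (Nat.eqb_spec i n); [lia|auto].
  - destruct (Nat.eqb_spec n J); [lia|]. rewrite IHn by lia. lra. Qed.

Lemma vnorm_comp N v i : (i < N)%nat -> Rabs (v i) <= vnorm N v.
Proof. intros Hi. unfold vnorm. rewrite <- sqrt_Rsqr_abs. apply sqrt_le_1_alt.
  unfold Rsqr. replace (v i * v i) with (v i ^ 2) by ring.
  apply (sumR_ge_term N (fun i => v i ^ 2)); auto. intros; apply pow2_ge_0. Qed.

Lemma vnorm_nonneg N v : 0 <= vnorm N v.
Proof. apply sqrt_pos. Qed.

Lemma sumsq_le_sqsum n x : sumR n (fun i => x i ^ 2) <= (sumR n (fun i => Rabs (x i))) ^ 2.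
Proof. induction n; simpl. - lra.
  - assert (0 <= sumR n (fun i => Rabs (x i))) by (apply sumR_nonneg; intros; apply Rabs_pos).
    assert (Rabs (x n) ^ 2 = x n ^ 2) by (rewrite <- !Rsqr_pow2; rewrite <- Rsqr_abs; auto).
    assert (0 <= Rabs (x n)) by apply Rabs_pos. simpl in IHn. nra. Qed.

Lemma vnorm_le_sumabs N x : vnorm N x <= sumR N (fun i => Rabs (x i)).
Proof. unfold vnorm. assert (0 <= sumR N (fun i => Rabs (x i))) by (apply sumR_nonneg; intros; apply Rabs_pos).
  rewrite <- (sqrt_pow2 (sumR N (fun i => Rabs (x i)))) by auto. apply sqrt_le_1_alt. apply sumsq_le_sqsum. Qed.

Lemma vnorm_bound N x m : (forall i, (i<N)%nat -> Rabs (x i) <= m) -> vnorm N x <= INR N * m.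
Proof. intros H. eapply Rle_trans; [apply vnorm_le_sumabs|]. rewrite <- sumR_const. apply sumR_le. auto. Qed.

Lemma vnorm_zero N v : (forall i, (i<N)%nat -> v i = 0) -> vnorm N v = 0.
Proof. intros H. unfold vnorm. rewrite (sumR_ext N _ (fun _ => 0)). rewrite sumR_zero. apply sqrt_0.
  intros i Hi. rewrite H; auto. ring. Qed.

Definition cl (a b x : R) : R := Rmax a (Rmin b x).

Lemma cl_in a b x : a <= b -> a <= cl a b x <= b.
Proof. intros. unfold cl, Rmax, Rmin. repeat destruct Rle_dec; lra. Qed.

Lemma cl_id a b x : a <= x <= b -> cl a b x = x.
Proof. intros. unfold cl, Rmax, Rmin. repeat destruct Rle_dec; lra. Qed.

Lemma cl_lip a b x y : a <= b -> Rabs (cl a b y - cl a b x) <= Rabs (y - x).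
Proof. intros. unfold cl, Rmax, Rmin. repeat destruct Rle_dec; unfold Rabs; repeat destruct Rcase_abs; lra. Qed.

Lemma cont_ed f x : (forall eps, 0<eps -> exists d, 0<d /\ forall y, Rabs (y-x) < d -> Rabs (f y - f x) < eps) -> continuity_pt f x.
Proof. intros H eps Heps. destruct (H eps Heps) as [d [Hd H']]. exists d; split; auto. intros y [_ Hy]. simpl in *. unfold R_dist in *. apply H'. exact Hy. Qed.

Lemma ed_cont f x : continuity_pt f x -> forall eps, 0<eps -> exists d, 0<d /\ forall y, Rabs (y-x) < d -> Rabs (f y - f x) < eps.
Proof. intros H eps Heps. destruct (H eps Heps) as [d [Hd H']]. exists d; split; auto. intros y Hy.
  simpl in H'. unfold R_dist in H'. destruct (Req_dec x y) as [<-|Hne]. { rewrite Rminus_diag, Rabs_R0; auto. } apply H'. split; auto. unfold D_x, no_cond. auto. Qed.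

Lemma cl_cont a b x : a <= b -> continuity_pt (cl a b) x.
Proof. intros Hab. apply cont_ed. intros eps He. exists eps; split; auto. intros y Hy.
  eapply Rle_lt_trans; [apply cl_lip; auto| auto]. Qed.

Definition wc (a b : R) (g : R -> R) : Prop := forall x, continuity_pt (fun y => g (cl a b y)) x.

Definition wcE (a b : R) (g : R -> R) : Prop := forall t, a <= t <= b -> forall eps, 0 < eps ->
  exists d, 0 < d /\ forall s, a <= s <= b -> Rabs (s - t) < d -> Rabs (g s - g t) < eps.

Lemma wcE_wc a b g : a <= b -> wcE a b g -> wc a b g.
Proof. intros Hab H x. apply cont_ed. intros eps He.
  destruct (H (cl a b x) (cl_in a b x Hab) eps He) as [d [Hd H']]. exists d; split; auto.
  intros y Hy. apply H'. apply cl_in; auto. eapply Rle_lt_trans; [apply cl_lip; auto|auto]. Qed.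

Lemma wc_ext a b g g' : a <= b -> (forall t, a <= t <= b -> g t = g' t) -> wc a b g -> wc a b g'.
Proof. intros Hab He H x. eapply continuity_pt_ext; [|apply H]. intros y. simpl. apply He. apply cl_in; auto. Qed.

Lemma wc_plus a b g1 g2 : wc a b g1 -> wc a b g2 -> wc a b (fun t => g1 t + g2 t).
Proof. intros H1 H2 x. apply (continuity_pt_plus (fun y => g1 (cl a b y)) (fun y => g2 (cl a b y))); auto. Qed.

Lemma wc_minus a b g1 g2 : wc a b g1 -> wc a b g2 -> wc a b (fun t => g1 t - g2 t).
Proof. intros H1 H2 x. apply (continuity_pt_minus (fun y => g1 (cl a b y)) (fun y => g2 (cl a b y))); auto. Qed.

Lemma wc_mult a b g1 g2 : wc a b g1 -> wc a b g2 -> wc a b (fun t => g1 t * g2 t).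
Proof. intros H1 H2 x. apply (continuity_pt_mult (fun y => g1 (cl a b y)) (fun y => g2 (cl a b y))); auto. Qed.

Lemma wc_cont a b g : a <= b -> (forall x, continuity_pt g x) -> wc a b g.
Proof. intros Hab H x. apply (continuity_pt_comp (cl a b) g); auto. apply cl_cont; auto. Qed.

Lemma wc_const a b c : a <= b -> wc a b (fun _ => c).
Proof. intros. apply wc_cont; auto. intros. apply continuity_pt_const. intros u v; auto. Qed.

Lemma wc_sub a b c d g : a <= c -> c <= d -> d <= b -> wc a b g -> wc c d g.
Proof. intros H1 H2 H3 H x. apply (continuity_pt_ext (fun y => g (cl a b (cl c d y)))).
  - intros y. rewrite (cl_id a b); auto. pose proof (cl_in c d y H2). lra.
  - apply (continuity_pt_comp (cl c d) (fun z => g (cl a b z))); auto. apply cl_cont; auto. Qed.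

Lemma wc_sumR a b n F : a <= b -> (forall i, (i<n)%nat -> wc a b (F i)) -> wc a b (fun t => sumR n (fun i => F i t)).
Proof. intros Hab. induction n; simpl; intros H.
  - apply wc_const; auto.
  - apply wc_plus. apply IHn; intros; apply H; lia. apply H; lia. Qed.

Lemma wc_contin a b g x : a <= b -> wc a b g -> continuous (fun y => g (cl a b y)) x.
Proof. intros. apply continuity_pt_filterlim. apply H0. Qed.

Lemma FTC_cell (W hh : R -> R) c d : c < d -> wc c d hh -> (forall x, continuity_pt W x) ->
  (forall t, c < t < d -> is_derive W t (hh t)) -> is_RInt hh c d (W d - W c).
Proof.
  intros Hcd Hw HW HD.
  set (H := fun y => hh (cl c d y)).
  assert (Hc : forall x, continuous H x) by (intros; apply wc_contin; lra || auto).
  assert (Hex : forall x y, ex_RInt H x y) by (intros; apply (@ex_RInt_continuous R_CompleteNormedModule); auto).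
  assert (HdI : forall x, is_derive (RInt H c) x (H x)).
  { intros x. apply is_derive_RInt with c. apply filter_forall. intros; apply (@RInt_correct R_CompleteNormedModule); auto. auto. }
  assert (Hmvt := MVT_gen (fun x => W x - RInt H c x) c d (fun x => hh x - H x)).
  rewrite Rmin_left, Rmax_right in Hmvt by lra.
  destruct Hmvt as [c0 [Hc0 Heq]].
  - intros x Hx. apply (is_derive_minus W (RInt H c)); auto.
  - intros x Hx. apply continuity_pt_minus; auto.
    apply continuity_pt_filterlim. apply (@ex_derive_continuous R_AbsRing R_NormedModule). eexists; apply HdI.
  - assert (hh c0 - H c0 = 0). { unfold H. rewrite cl_id; lra. }
    rewrite H0, Rmult_0_l, RInt_point in Heq.
    assert (E : RInt H c d = W d - W c). { unfold zero in Heq; simpl in Heq. lra. }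
    assert (Hi := RInt_correct H c d (Hex c d)). rewrite E in Hi.
    apply (is_RInt_ext H). rewrite Rmin_left, Rmax_right by lra. intros x Hx. unfold H. rewrite cl_id; lra. auto.
Qed.

Lemma PFTC (W h : R -> R) (S : list R) : forall a b, a < b -> (forall x, continuity_pt W x) ->
  (forall c d, a <= c -> c < d -> d <= b -> (forall s, In s S -> ~ (c < s < d)) ->
     exists hh, wc c d hh /\ (forall t, c < t < d -> h t = hh t /\ is_derive W t (hh t))) ->
  is_RInt h a b (W b - W a).
Proof.
  induction S as [|s S IH]; intros a b Hab HW Hcell.
  - destruct (Hcell a b) as [hh [Hw Hh]]; try lra. intros s [].
    apply (is_RInt_ext hh). rewrite Rmin_left, Rmax_right by lra. intros x Hx; symmetry; apply Hh; auto.
    apply FTC_cell; auto. intros; apply Hh; auto.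
  - destruct (Rlt_dec a s); [destruct (Rlt_dec s b)|].
    + assert (H1 : is_RInt h a s (W s - W a)).
      { apply IH; auto. intros c d Hc1 Hc2 Hc3 Hn. apply Hcell; auto; try lra. intros s0 [<-|Hs0]; [lra|auto]. }
      assert (H2 : is_RInt h s b (W b - W s)).
      { apply IH; auto. intros c d Hc1 Hc2 Hc3 Hn. apply Hcell; auto; try lra. intros s0 [<-|Hs0]; [lra|auto]. }
      assert (Hc := is_RInt_Chasles _ _ _ _ _ _ H1 H2).
      replace (W b - W a) with (plus (W s - W a) (W b - W s)) by (change plus with Rplus; simpl; lra). auto.
    + apply IH; auto. intros c d Hc1 Hc2 Hc3 Hn. apply Hcell; auto. intros s0 [<-|Hs0]; [lra|auto].
    + apply IH; auto. intros c d Hc1 Hc2 Hc3 Hn. apply Hcell; auto. intros s0 [<-|Hs0]; [lra|auto].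
Qed.

Lemma PINT (h : R -> R) (S : list R) : forall a b, a < b ->
  (forall c d, a <= c -> c < d -> d <= b -> (forall s, In s S -> ~ (c < s < d)) ->
     exists hh, wc c d hh /\ (forall t, c < t < d -> h t = hh t)) ->
  ex_RInt h a b.
Proof.
  induction S as [|s S IH]; intros a b Hab Hcell.
  - destruct (Hcell a b) as [hh [Hw Hh]]; try lra. intros s [].
    apply (ex_RInt_ext (fun y => hh (cl a b y))). rewrite Rmin_left, Rmax_right by lra. intros x Hx.
    rewrite cl_id by lra. symmetry; apply Hh; auto.
    apply (@ex_RInt_continuous R_CompleteNormedModule). intros; apply wc_contin; auto; lra.
  - destruct (Rlt_dec a s); [destruct (Rlt_dec s b)|].
    + apply ex_RInt_Chasles with s.
      { apply IH; auto. intros c d Hc1 Hc2 Hc3 Hn. apply Hcell; auto; try lra. intros s0 [<-|Hs0]; [lra|auto]. }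
      { apply IH; auto. intros c d Hc1 Hc2 Hc3 Hn. apply Hcell; auto; try lra. intros s0 [<-|Hs0]; [lra|auto]. }
    + apply IH; auto. intros c d Hc1 Hc2 Hc3 Hn. apply Hcell; auto. intros s0 [<-|Hs0]; [lra|auto].
    + apply IH; auto. intros c d Hc1 Hc2 Hc3 Hn. apply Hcell; auto. intros s0 [<-|Hs0]; [lra|auto].
Qed.

Lemma is_RInt_sumR n (F : nat -> R -> R) a b : (forall i, (i<n)%nat -> ex_RInt (F i) a b) ->
  is_RInt (fun t => sumR n (fun i => F i t)) a b (sumR n (fun i => RInt (F i) a b)).
Proof.
  induction n; simpl; intros H.
  - assert (H0 := @is_RInt_const R_NormedModule a b 0). unfold scal in H0; simpl in H0; unfold mult in H0; simpl in H0. rewrite Rmult_0_r in H0. exact H0.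
  - apply (is_RInt_plus (fun t => sumR n (fun i => F i t)) (F n)). apply IHn; intros; apply H; lia.
    apply (@RInt_correct R_CompleteNormedModule); apply H; lia.
Qed.

Lemma RInt_partition (g : R -> R) (x : nat -> R) M : (forall j, (j < M)%nat -> ex_RInt g (x j) (x (S j))) ->
  is_RInt g (x 0%nat) (x M) (sumR M (fun j => RInt g (x j) (x (S j)))).
Proof.
  induction M; simpl; intros H.
  - exact (@is_RInt_point R_NormedModule g (x 0%nat)).
  - apply (is_RInt_Chasles g _ (x M)). apply IHM; intros; apply H; lia. apply (@RInt_correct R_CompleteNormedModule); apply H; lia.
Qed.

Lemma cont_on_wcE T g : cont_on_0T T g -> wcE 0 T g.
Proof.
  intros H t Ht eps He.
  assert (Hf := H t Ht (fun y => Rabs (y - g t) < eps)).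
  destruct Hf as [d Hd].
  { exists (mkposreal eps He). intros y Hy. exact Hy. }
  exists d; split. apply cond_pos. intros s Hs Hst. apply (Hd s); auto.
Qed.

Fixpoint dpeval (p : list R) (t : R) : R :=
  match p with
  | nil => 0
  | cons c q => peval q t + t * dpeval q t
  end.

Lemma peval_derive p t : is_derive (peval p) t (dpeval p t).
Proof.
  revert t; induction p as [|c q IH]; intros t; simpl.
  - apply (is_derive_ext (fun _ => 0)). intros; reflexivity. apply (@is_derive_const R_AbsRing).
  - apply (is_derive_ext (fun t => c + t * peval q t)). intros; reflexivity.
    apply is_derive_Reals. specialize (IH t). apply is_derive_Reals in IH.
    replace (peval q t + t * dpeval q t) with (0 + (1 * peval q t + t * dpeval q t)) by ring.
    apply (derivable_pt_lim_plus (fun _ => c) (fun t => t * peval q t)).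
    apply derivable_pt_lim_const.
    apply (derivable_pt_lim_mult id (peval q)). apply derivable_pt_lim_id. auto.
Qed.

Lemma peval_cont p x : continuity_pt (peval p) x.
Proof. apply continuity_pt_filterlim. apply (@ex_derive_continuous R_AbsRing R_NormedModule). eexists; apply peval_derive. Qed.

Lemma dpeval_cont p x : continuity_pt (dpeval p) x.
Proof.
  induction p as [|c q IH]; simpl.
  - apply (continuity_pt_ext (fun _ => 0)). intros; reflexivity. apply continuity_pt_const. intros u v; auto.
  - apply (continuity_pt_ext (fun t => peval q t + t * dpeval q t)). intros; reflexivity.
    apply (continuity_pt_plus (peval q) (fun t => t * dpeval q t)). apply peval_cont.
    apply (continuity_pt_mult id (dpeval q)). apply derivable_continuous_pt, derivable_pt_id. auto.
Qed.

Lemma fin_choice (N:nat) (Q : nat -> nat -> Prop) :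
  (forall i, (i<N)%nat -> exists j, Q i j) -> exists J : nat -> nat, forall i, (i<N)%nat -> Q i (J i).
Proof.
  induction N; intros H.
  - exists (fun _ => 0%nat). intros; lia.
  - destruct IHN as [J HJ]. intros; apply H; lia.
    destruct (H N ltac:(lia)) as [j Hj].
    exists (fun i => if Nat.eqb i N then j else J i). intros i Hi.
    destruct (Nat.eqb_spec i N). subst; auto. apply HJ; lia.
Qed.

Lemma fin_choiceF (N:nat) (Q : nat -> (R -> R) -> Prop) :
  (forall i, (i<N)%nat -> exists F, Q i F) -> exists G : nat -> R -> R, forall i, (i<N)%nat -> Q i (G i).
Proof.
  induction N; intros H.
  - exists (fun _ _ => 0). intros; lia.
  - destruct IHN as [J HJ]. intros; apply H; lia.
    destruct (H N ltac:(lia)) as [j Hj].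
    exists (fun i => if Nat.eqb i N then j else J i). intros i Hi.
    destruct (Nat.eqb_spec i N). subst; auto. apply HJ; lia.
Qed.

Lemma fin_delta (N:nat) (Q : nat -> R -> Prop) :
  (forall i d d', (i<N)%nat -> 0 < d' <= d -> Q i d -> Q i d') ->
  (forall i, (i<N)%nat -> exists d, 0 < d /\ Q i d) -> exists d, 0 < d /\ forall i, (i<N)%nat -> Q i d.
Proof.
  intros Hmono. induction N; intros H.
  - exists 1. split; [lra|intros; lia].
  - destruct IHN as [d [Hd HQ]]. intros i d0 d' Hi; apply Hmono; lia. intros; apply H; lia.
    destruct (H N ltac:(lia)) as [d1 [Hd1 HQ1]].
    exists (Rmin d d1). split. apply Rmin_pos; auto. intros i Hi.
    destruct (Nat.eq_dec i N) as [->|Hne].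
    + apply (Hmono N d1). lia. split. apply Rmin_pos; auto. apply Rmin_r. exact HQ1.
    + apply (Hmono i d). lia. split. apply Rmin_pos; auto. apply Rmin_l. apply HQ; lia.
Qed.

Lemma lip_pos N T f : f_lipschitz N T f -> exists L, 0 < L /\ forall v w t s k, 0 < t <= T -> 0 < s <= T -> (k < N)%nat ->
  Rabs (f v t k - f w s k) <= L * (vnorm N (vsub v w) + Rabs (t - s)).
Proof.
  intros [L HL]. exists (Rabs L + 1). split. pose proof (Rabs_pos L); lra.
  intros v w t s k Ht Hs Hk.
  assert (H1 := HL v w t s Ht Hs).
  assert (H2 := vnorm_comp N (vsub (f v t) (f w s)) k Hk). unfold vsub at 1 in H2.
  assert (0 <= vnorm N (vsub v w) + Rabs (t - s)) by (pose proof (vnorm_nonneg N (vsub v w)); pose proof (Rabs_pos (t-s)); lra).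
  assert (L <= Rabs L + 1) by (pose proof (Rle_abs L); lra).
  assert (L * (vnorm N (vsub v w) + Rabs (t - s)) <= (Rabs L + 1) * (vnorm N (vsub v w) + Rabs (t - s))) by nra.
  lra.
Qed.

Lemma f_agree N T f v w t k : f_lipschitz N T f -> 0 < t <= T -> (k < N)%nat ->
  (forall i, (i<N)%nat -> v i = w i) -> f v t k = f w t k.
Proof.
  intros Hl Ht Hk Hvw. destruct (lip_pos N T f Hl) as [L [HL H]].
  assert (H1 := H v w t t k Ht Ht Hk).
  rewrite vnorm_zero in H1. rewrite Rminus_diag, Rabs_R0 in H1.
  assert (Rabs (f v t k - f w t k) = 0) by (pose proof (Rabs_pos (f v t k - f w t k)); lra).
  apply Rabs_eq_0 in H0. lra.
  intros i Hi. unfold vsub. rewrite Hvw; auto; ring.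
Qed.

Lemma comps_cont N (Pv : R -> vec) : (forall k, (k<N)%nat -> forall x, continuity_pt (fun t => Pv t k) x) ->
  forall x e, 0 < e -> exists d, 0 < d /\ forall y, Rabs (y - x) < d -> forall k, (k<N)%nat -> Rabs (Pv y k - Pv x k) < e.
Proof.
  intros Hc x e He.
  destruct (fin_delta N (fun k d => forall y, Rabs (y - x) < d -> Rabs (Pv y k - Pv x k) < e)) as [d [Hd H]].
  - intros i d d' Hi Hdd H y Hy. apply H. lra.
  - intros i Hi. apply ed_cont. apply Hc; auto. auto.
  - exists d; split; auto.
Qed.

Lemma vnorm_small N (x : vec) e : 0 < e -> (forall k, (k<N)%nat -> Rabs (x k) < e / (INR N + 1)) -> vnorm N x < e.
Proof.
  intros He H. eapply Rle_lt_trans. apply (vnorm_bound N _ (e / (INR N + 1))). intros i Hi. left. apply H; auto.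
  pose proof (pos_INR N). apply Rmult_lt_reg_r with (INR N + 1). lra.
  replace (INR N * (e / (INR N + 1)) * (INR N + 1)) with (INR N * e) by (field; lra). nra.
Qed.

Lemma fterm_ext N T f (Pv : R -> vec) i c d : f_lipschitz N T f -> (i < N)%nat -> 0 <= c -> c < d -> d <= T ->
  (forall k, (k<N)%nat -> forall x, continuity_pt (fun t => Pv t k) x) ->
  exists F, wc c d F /\ forall t, c < t <= d -> F t = f (Pv t) t i.
Proof.
  intros Hl Hi Hc Hcd HdT HPv.
  destruct (lip_pos N T f Hl) as [L [HL HLip]].
  set (q := fun t => f (Pv t) t i).
  assert (Hq : forall x y, 0 < x <= T -> 0 < y <= T -> Rabs (q y - q x) <= L * (vnorm N (vsub (Pv y) (Pv x)) + Rabs (y - x))).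
  { intros; apply HLip; auto. }
  assert (HN : 0 < INR N + 1) by (pose proof (pos_INR N); lra).
  assert (Hlim : exists l, filterlim q (at_right c) (locally l)).
  { apply (Hierarchy.filterlim_locally_cauchy (F:=at_right c) q).
    intros eps. assert (Heps : 0 < eps) by apply cond_pos.
    destruct (comps_cont N Pv HPv c (eps / (4 * L) / (INR N + 1) / 2)) as [d1 [Hd1 H1]].
    { repeat apply Rdiv_lt_0_compat; lra. }
    assert (Hd2 : 0 < Rmin d1 (Rmin (d - c) (eps / (4 * L)))).
    { apply Rmin_pos; auto. apply Rmin_pos. lra. apply Rdiv_lt_0_compat; lra. }
    exists (fun s => c < s < c + Rmin d1 (Rmin (d - c) (eps / (4 * L)))). split.
    - exists (mkposreal _ Hd2). intros y Hy Hcy. split; auto. simpl in Hy. unfold ball in Hy; simpl in Hy.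
      unfold AbsRing_ball, abs, minus, plus, opp in Hy; simpl in Hy. apply Rabs_def2 in Hy. lra.
    - intros u v Hu Hv. unfold ball; simpl; unfold AbsRing_ball, abs, minus, plus, opp; simpl.
      pose proof (Rmin_l d1 (Rmin (d - c) (eps / (4 * L)))).
      pose proof (Rmin_r d1 (Rmin (d - c) (eps / (4 * L)))).
      pose proof (Rmin_l (d - c) (eps / (4 * L))). pose proof (Rmin_r (d - c) (eps / (4 * L))).
      assert (Hvu : vnorm N (vsub (Pv v) (Pv u)) < eps / (4 * L)).
      { apply vnorm_small. apply Rdiv_lt_0_compat; lra. intros k Hk. unfold vsub.
        assert (Ha := H1 u ltac:(rewrite Rabs_pos_eq; lra) k Hk).
        assert (Hb := H1 v ltac:(rewrite Rabs_pos_eq; lra) k Hk).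
        replace (Pv v k - Pv u k) with ((Pv v k - Pv c k) - (Pv u k - Pv c k)) by ring.
        eapply Rle_lt_trans. apply Rabs_triang. rewrite Rabs_Ropp. lra. }
      assert (H4 := Hq u v ltac:(lra) ltac:(lra)).
      assert (Rabs (v - u) < eps / (4 * L)) by (apply Rabs_def1; lra).
      assert (eps / (4 * L) * L = eps / 4) by (field; lra).
      apply Rle_lt_trans with (L * (vnorm N (vsub (Pv v) (Pv u)) + Rabs (v - u))). exact H4. nra. }
  destruct Hlim as [l Hl0].
  exists (fun t => if Rle_dec t c then l else q t). split.
  - apply wcE_wc. lra. intros t Ht eps He.
    destruct (Rle_dec t c).
    + assert (Hb := Hl0 (fun y => Rabs (y - l) < eps)).
      destruct Hb as [dd Hdd]. { exists (mkposreal eps He). intros y Hy; exact Hy. }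
      exists dd; split. apply cond_pos. intros s Hs Hst. destruct (Rle_dec s c).
      * rewrite Rminus_diag, Rabs_R0; auto.
      * apply Hdd. assert (t = c) by lra. subst t. exact Hst. lra.
    + destruct (comps_cont N Pv HPv t (eps / (2 * L) / (INR N + 1))) as [d1 [Hd1 H1]].
      { repeat apply Rdiv_lt_0_compat; lra. }
      exists (Rmin d1 (Rmin (t - c) (eps / (2 * L)))). split.
      { apply Rmin_pos; auto. apply Rmin_pos. lra. apply Rdiv_lt_0_compat; lra. }
      intros s Hs Hst.
      pose proof (Rmin_l d1 (Rmin (t - c) (eps / (2 * L)))).
      pose proof (Rmin_r d1 (Rmin (t - c) (eps / (2 * L)))).
      pose proof (Rmin_l (t - c) (eps / (2 * L))). pose proof (Rmin_r (t - c) (eps / (2 * L))).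
      assert (Hsc : c < s) by (apply Rabs_def2 in Hst; lra).
      destruct (Rle_dec s c); [lra|].
      assert (Hvu : vnorm N (vsub (Pv s) (Pv t)) < eps / (2 * L)).
      { apply vnorm_small. apply Rdiv_lt_0_compat; lra. intros k Hk. unfold vsub. apply H1; auto. lra. }
      assert (H4 := Hq t s ltac:(lra) ltac:(lra)).
      assert (eps / (2 * L) * L = eps / 2) by (field; lra).
      apply Rle_lt_trans with (L * (vnorm N (vsub (Pv s) (Pv t)) + Rabs (s - t))). exact H4. nra.
  - intros t Ht. destruct (Rle_dec t c); [lra|]. reflexivity.
Qed.

Lemma vupd_vupd v m x y : vupd (vupd v m x) m y = vupd v m y.
Proof. apply functional_extensionality. intros i. unfold vupd. destruct (Nat.eqb i m); auto. Qed.

Lemma vupd_same v m x : vupd v m x m = x.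
Proof. unfold vupd. rewrite Nat.eqb_refl. auto. Qed.

Lemma chain N T f t v1 v2 k s0 : f_lipschitz N T f -> f_C1_in_u N T f -> 0 < t <= T -> (k<N)%nat ->
  is_derive (fun s => f (vcomb s v1 v2) t k) s0
    (sumR N (fun m => pdf f k m (vcomb s0 v1 v2) t * (v1 m - v2 m))).
Proof.
  intros Hl [Hex Hcont] Ht Hk.
  apply is_derive_Reals. intros eps Heps.
  set (d := fun m => v1 m - v2 m).
  set (D := sumR N (fun m => Rabs (d m))).
  assert (HD : 0 <= D) by (apply sumR_nonneg; intros; apply Rabs_pos).
  set (x0 := vcomb s0 v1 v2).
  set (eps' := eps / (D + 1)).
  assert (He' : 0 < eps') by (apply Rdiv_lt_0_compat; lra).
  destruct (fin_delta N (fun m dl => forall w, vnorm N (vsub w x0) < dl -> Rabs (pdf f k m w t - pdf f k m x0 t) < eps'))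
    as [dl [Hdl Hdlp]].
  { intros m a b Hm Hab H w Hw. apply H. lra. }
  { intros m Hm. destruct (Hcont x0 t k m Ht Hk Hm eps' He') as [dl [Hdl H]].
    exists dl; split; auto. intros w Hw. apply H; auto. rewrite Rminus_diag, Rabs_R0; auto. }
  assert (Hdp : 0 < dl / (D + 1)) by (apply Rdiv_lt_0_compat; lra).
  exists (mkposreal _ Hdp). intros h Hh0 Hh. simpl in Hh.
  set (x1 := vcomb (s0 + h) v1 v2).
  assert (Hx : forall i, x1 i - x0 i = h * d i) by (intros; unfold x1, x0, vcomb, d; ring).
  set (z := fun m => fun i => if Nat.ltb i m then x1 i else x0 i).
  assert (HhD : Rabs h * D < dl).
  { assert (Rabs h * (D + 1) < dl) by (apply Rmult_lt_reg_r with (/ (D+1)); [apply Rinv_0_lt_compat; lra|];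
       rewrite Rmult_assoc, Rinv_r, Rmult_1_r by lra; exact Hh). pose proof (Rabs_pos h). nra. }
  assert (Hm : forall m, (m < N)%nat ->
     Rabs (f (z (S m)) t k - f (z m) t k - h * d m * pdf f k m x0 t) <= eps' * Rabs h * Rabs (d m)).
  { intros m Hm.
    set (g := fun x => f (vupd (z m) m x) t k).
    assert (Hzs : z (S m) = vupd (z m) m (x1 m)).
    { apply functional_extensionality. intros i. unfold z, vupd.
      destruct (Nat.eqb_spec i m); destruct (Nat.ltb_spec i (S m)), (Nat.ltb_spec i m); subst; auto; lia. }
    assert (Hzm : z m = vupd (z m) m (x0 m)).
    { apply functional_extensionality. intros i. unfold z, vupd.
      destruct (Nat.eqb_spec i m); destruct (Nat.ltb_spec i m); subst; auto; lia. }
    replace (f (z (S m)) t k) with (g (x1 m)) by (unfold g; rewrite Hzs; reflexivity).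
    replace (f (z m) t k) with (g (x0 m)) by (unfold g; rewrite <- Hzm; reflexivity).
    assert (Hgd : forall x, ex_derive g x).
    { intros x. assert (H := Hex (vupd (z m) m x) t k m Ht Hk Hm).
      rewrite vupd_same in H. unfold g. eapply ex_derive_ext; [|exact H]. intros y; simpl. rewrite vupd_vupd; auto. }
    assert (Hpdf : forall x, Derive g x = pdf f k m (vupd (z m) m x) t).
    { intros x. unfold pdf. rewrite vupd_same. apply Derive_ext. intros y. unfold g. rewrite vupd_vupd; auto. }
    destruct (MVT_gen g (x0 m) (x1 m) (Derive g)) as [xi [Hxi Heq]].
    { intros x _. apply Derive_correct; auto. }
    { intros x _. apply continuity_pt_filterlim. apply (@ex_derive_continuous R_AbsRing R_NormedModule). auto. }
    rewrite Heq, Hpdf.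
    assert (Hclose : vnorm N (vsub (vupd (z m) m xi) x0) < dl).
    { eapply Rle_lt_trans; [apply vnorm_le_sumabs|].
      eapply Rle_lt_trans; [|apply HhD]. unfold D. rewrite <- sumR_scal. apply sumR_le. intros i Hi.
      rewrite <- Rabs_mult. unfold vsub, vupd, z.
      destruct (Nat.eqb_spec i m).
      - subst i. rewrite <- Hx. unfold Rmin, Rmax in Hxi. destruct (Rle_dec (x0 m) (x1 m));
          unfold Rabs; repeat destruct Rcase_abs; lra.
      - destruct (Nat.ltb i m). rewrite Hx. lra. rewrite Rminus_diag, Rabs_R0. apply Rabs_pos. }
    assert (Hp := Hdlp m Hm _ Hclose).
    rewrite Hx.
    replace (pdf f k m (vupd (z m) m xi) t * (h * d m) - h * d m * pdf f k m x0 t)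
      with ((h * d m) * (pdf f k m (vupd (z m) m xi) t - pdf f k m x0 t)) by ring.
    rewrite Rabs_mult, Rabs_mult. pose proof (Rabs_pos h). pose proof (Rabs_pos (d m)).
    assert (0 <= Rabs h * Rabs (d m)) by nra. nra. }
  assert (Htel : f x1 t k - f x0 t k = sumR N (fun m => f (z (S m)) t k - f (z m) t k)).
  { rewrite (sumR_telescope N (fun m => f (z m) t k)).
    assert (Hz0 : z 0%nat = x0) by (apply functional_extensionality; intros i; unfold z; destruct i; reflexivity).
    rewrite Hz0. f_equal. apply (f_agree N T); auto. intros i Hi. unfold z. replace (Nat.ltb i N) with true; auto.
    symmetry; apply Nat.ltb_lt; auto. }
  simpl. fold x1. fold x0. rewrite Htel.
  assert (Hsum : Rabs (sumR N (fun m => f (z (S m)) t k - f (z m) t k) - h * sumR N (fun m => pdf f k m x0 t * d m))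
     <= eps' * Rabs h * D).
  { rewrite <- sumR_scal, <- sumR_minus. eapply Rle_trans; [apply sumR_abs|].
    unfold D. rewrite <- sumR_scal. apply sumR_le. intros m Hm'.
    replace (f (z (S m)) t k - f (z m) t k - h * (pdf f k m x0 t * d m)) with
      (f (z (S m)) t k - f (z m) t k - h * d m * pdf f k m x0 t) by ring.
    eapply Rle_trans; [apply Hm; auto| right; ring]. }
  replace (sumR N (fun m => f (z (S m)) t k - f (z m) t k) / h - sumR N (fun m => pdf f k m x0 t * (v1 m - v2 m)))
    with ((sumR N (fun m => f (z (S m)) t k - f (z m) t k) - h * sumR N (fun m => pdf f k m x0 t * d m)) / h)
    by (unfold d; field; auto).
  unfold Rdiv. rewrite Rabs_mult, Rabs_inv.
  assert (0 < Rabs h) by (apply Rabs_pos_lt; auto).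
  apply Rle_lt_trans with (eps' * Rabs h * D * / Rabs h).
  apply Rmult_le_compat_r. left; apply Rinv_0_lt_compat; auto. auto.
  replace (eps' * Rabs h * D * / Rabs h) with (eps' * D) by (field; lra).
  unfold eps'. apply Rmult_lt_reg_r with (D + 1). lra.
  replace (eps / (D + 1) * D * (D + 1)) with (eps * D) by (field; lra). nra.
Qed.

Lemma is_RInt_sumR' n (F : nat -> R -> R) (I : nat -> R) a b : (forall i, (i<n)%nat -> is_RInt (F i) a b (I i)) ->
  is_RInt (fun t => sumR n (fun i => F i t)) a b (sumR n I).
Proof.
  induction n; simpl; intros H.
  - assert (H0 := @is_RInt_const R_NormedModule a b 0). unfold scal in H0; simpl in H0; unfold mult in H0; simpl in H0.
    rewrite Rmult_0_r in H0. exact H0.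
  - apply (is_RInt_plus (fun t => sumR n (fun i => F i t)) (F n)). apply IHn; intros; apply H; lia. apply H; lia.
Qed.

Lemma cont_sumR n (F : nat -> R -> R) x : (forall i, (i<n)%nat -> continuity_pt (F i) x) ->
  continuity_pt (fun t => sumR n (fun i => F i t)) x.
Proof.
  induction n; simpl; intros H.
  - apply continuity_pt_const. intros u v; auto.
  - apply (continuity_pt_plus (fun t => sumR n (fun i => F i t)) (F n)). apply IHn; intros; apply H; lia. apply H; lia.
Qed.

Lemma mvt_vec N T f t v1 v2 k : f_lipschitz N T f -> f_C1_in_u N T f -> 0 < t <= T -> (k<N)%nat ->
  f v2 t k - f v1 t k = sumR N (fun i => (v2 i - v1 i) * Jstar f v1 v2 t i k).
Proof.
  intros Hl HC Ht Hk.
  set (D := sumR N (fun m => Rabs (v1 m - v2 m))).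
  assert (HD : 0 <= D) by (apply sumR_nonneg; intros; apply Rabs_pos).
  assert (Hcp : forall m, (m<N)%nat -> forall s0, continuity_pt (fun s => pdf f k m (vcomb s v1 v2) t) s0).
  { intros m Hm s0. apply cont_ed. intros eps He. destruct HC as [_ Hcont].
    destruct (Hcont (vcomb s0 v1 v2) t k m Ht Hk Hm eps He) as [dl [Hdl H]].
    exists (dl / (D + 1)). split. apply Rdiv_lt_0_compat; lra.
    intros y Hy. apply H; auto; [|rewrite Rminus_diag, Rabs_R0; auto].
    eapply Rle_lt_trans; [apply vnorm_le_sumabs|].
    apply Rle_lt_trans with (Rabs (y - s0) * D).
    { unfold D. rewrite <- sumR_scal. apply sumR_le. intros i Hi. rewrite <- Rabs_mult. right. f_equal. unfold vsub, vcomb. ring. }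
    assert (Rabs (y - s0) * (D + 1) < dl) by (apply Rmult_lt_reg_r with (/ (D+1)); [apply Rinv_0_lt_compat; lra|];
       rewrite Rmult_assoc, Rinv_r, Rmult_1_r by lra; exact Hy). pose proof (Rabs_pos (y - s0)). nra. }
  set (dphi := fun s => sumR N (fun m => pdf f k m (vcomb s v1 v2) t * (v1 m - v2 m))).
  assert (H1 : is_RInt dphi 0 1 (minus (f (vcomb 1 v1 v2) t k) (f (vcomb 0 v1 v2) t k))).
  { apply (is_RInt_derive (fun s => f (vcomb s v1 v2) t k) dphi).
    - intros x _. apply chain with T; auto.
    - intros x _. apply continuity_pt_filterlim. apply cont_sumR. intros i Hi.
      apply (continuity_pt_mult (fun s => pdf f k i (vcomb s v1 v2) t) (fun _ => v1 i - v2 i)). apply Hcp; auto.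
      apply continuity_pt_const; intros u v; auto. }
  assert (H2 : is_RInt dphi 0 1 (sumR N (fun i => (v1 i - v2 i) * Jstar f v1 v2 t i k))).
  { apply (is_RInt_ext (fun s => sumR N (fun m => (v1 m - v2 m) * pdf f k m (vcomb s v1 v2) t))).
    { intros x _. unfold dphi. apply sumR_ext. intros; ring. }
    apply is_RInt_sumR'. intros i Hi. unfold Jstar.
    apply (is_RInt_scal (fun s => pdf f k i (vcomb s v1 v2) t)).
    apply (@RInt_correct R_CompleteNormedModule). apply (@ex_RInt_continuous R_CompleteNormedModule).
    intros z _. apply continuity_pt_filterlim. apply Hcp; auto. }
  assert (E := is_RInt_unique _ _ _ _ H1). rewrite (is_RInt_unique _ _ _ _ H2) in E.
  assert (E1 : vcomb 1 v1 v2 = v1) by (apply functional_extensionality; intros; unfold vcomb; ring).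
  assert (E0 : vcomb 0 v1 v2 = v2) by (apply functional_extensionality; intros; unfold vcomb; ring).
  rewrite E1, E0 in E. change (minus (f v1 t k) (f v2 t k)) with (f v1 t k - f v2 t k) in E.
  rewrite (sumR_ext N _ (fun i => -1 * ((v1 i - v2 i) * Jstar f v1 v2 t i k))) by (intros; ring).
  rewrite sumR_scal. lra.
Qed.

Lemma is_derive_sumR n (F : nat -> R -> R) (dF : nat -> R) x : (forall i, (i<n)%nat -> is_derive (F i) x (dF i)) ->
  is_derive (fun t => sumR n (fun i => F i t)) x (sumR n dF).
Proof.
  induction n; simpl; intros H.
  - apply (is_derive_ext (fun _ => 0)). intros; reflexivity. apply (@is_derive_const R_AbsRing).
  - apply (is_derive_plus (fun t => sumR n (fun i => F i t)) (F n)). apply IHn; intros; apply H; lia. apply H; lia.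
Qed.

Lemma locally_interval c d t : c < t < d -> locally t (fun s => c < s < d).
Proof.
  intros H. assert (Hp : 0 < Rmin (t - c) (d - t)) by (apply Rmin_pos; lra).
  exists (mkposreal _ Hp). intros y Hy. simpl in Hy. unfold ball in Hy; simpl in Hy.
  unfold AbsRing_ball, abs, minus, plus, opp in Hy; simpl in Hy. apply Rabs_def2 in Hy.
  pose proof (Rmin_l (t - c) (d - t)). pose proof (Rmin_r (t - c) (d - t)). lra.
Qed.

Lemma part_mono (tt : nat -> R) M : (forall j, (j < M)%nat -> tt j < tt (S j)) ->
  forall j k, (j <= k)%nat -> (k <= M)%nat -> tt j <= tt k.
Proof.
  intros H j k Hjk. induction Hjk; intros HkM. lra.
  assert (tt m < tt (S m)) by (apply H; lia). assert (tt j <= tt m) by (apply IHHjk; lia). lra.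
Qed.

Lemma part_cell (tt : nat -> R) M c d T : tt 0%nat = 0 -> tt M = T -> 0 <= c -> c < d -> d <= T ->
  (forall j, (j <= M)%nat -> ~ (c < tt j < d)) ->
  exists j', (j' < M)%nat /\ tt j' <= c /\ d <= tt (S j').
Proof.
  intros H0 HM Hc Hcd HdT Hn.
  assert (Hind : forall m, (m <= M)%nat -> tt m <= c \/ exists j', (S j' <= m)%nat /\ tt j' <= c /\ d <= tt (S j')).
  { induction m; intros Hm. left; lra.
    destruct (IHm ltac:(lia)) as [Hl|[j' Hj']].
    - destruct (Rle_dec (tt (S m)) c). left; auto.
      destruct (Rle_dec d (tt (S m))). right. exists m. split; [lia|split; auto].
      exfalso. apply (Hn (S m)); auto. lra.
    - right. exists j'. split; [lia|apply Hj']. }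
  destruct (Hind M ltac:(lia)) as [Hl|[j' Hj']]. lra. exists j'. split; [lia|apply Hj'].
Qed.

Definition nodes (N : nat) (M : nat -> nat) (tt : nat -> nat -> R) : list R :=
  flat_map (fun k => map (tt k) (seq 0 (S (M k)))) (seq 0 N).

Lemma in_nodes N M tt i j : (i < N)%nat -> (j <= M i)%nat -> In (tt i j) (nodes N M tt).
Proof.
  intros Hi Hj. unfold nodes. apply in_flat_map. exists i. split. apply in_seq. lia.
  apply in_map. apply in_seq. lia.
Qed.

Lemma node_in N M tt t : is_node N M tt t -> In t (nodes N M tt).
Proof. intros [k [j [Hk [Hj ->]]]]. apply in_nodes; auto. Qed.

Lemma dpl_eq f x l l' : derivable_pt_lim f x l -> l = l' -> derivable_pt_lim f x l'.
Proof. intros H ->; auto. Qed.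

Lemma cl_low a b x : x <= a -> a <= b -> cl a b x = a.
Proof. intros. unfold cl, Rmax, Rmin. repeat destruct Rle_dec; lra. Qed.

Lemma cl_high a b x : b <= x -> a <= b -> cl a b x = b.
Proof. intros. unfold cl, Rmax, Rmin. repeat destruct Rle_dec; lra. Qed.

Theorem corollary6p2
  (N : nat) (T : R) (f : vec -> R -> vec)
  (u U phi : R -> vec) (u0 : vec)
  (M : nat -> nat) (tt : nat -> nat -> R) (P : nat -> nat -> list R) :
  0 < T ->
  (* standing assumptions on f *)
  f_bounded N T f -> f_lipschitz N T f -> f_C1_in_u N T f ->
  (* u is the exact solution of  u' = f(u,t), t in (0,T],  u(0) = u0 *)
  (forall i, (i < N)%nat -> u 0 i = u0 i) ->
  (forall i, (i < N)%nat -> cont_on_0T T (fun s => u s i)) ->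
  (forall i t, (i < N)%nat -> 0 < t < T ->
     is_derive (fun s => u s i) t (f (u t) t i)) ->
  (forall i, (i < N)%nat ->
     filterlim (fun h => (u (T + h) i - u T i) / h) (at_left 0)
       (locally (f (u T) T i))) ->
  (* partitions 0 = t_{i0} < ... < t_{iM_i} = T *)
  (forall i, (i < N)%nat -> tt i 0%nat = 0) ->
  (forall i, (i < N)%nat -> tt i (M i) = T) ->
  (forall i j, (i < N)%nat -> (j < M i)%nat -> tt i j < tt i (S j)) ->
  (* U_i restricted to I_{ij} = (t_{i,j-1}, t_{ij}] is the polynomial P i j *)
  (forall i j t, (i < N)%nat -> (1 <= j <= M i)%nat ->
     tt i (j - 1)%nat < t <= tt i j -> U t i = peval (P i j) t) ->
  (* U is right-continuous at T *)
  (forall i, (i < N)%nat -> filterlim (fun s => U s i) (at_right T) (locally (U T i))) ->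
  (* e(T) = U(T) - u(T) <> 0 *)
  vnorm N (vsub (U T) (u T)) <> 0 ->
  (* phi solves the dual problem  -phi' = J^*(u,U,.) phi  on [0,T),
     phi(T) = e(T)/||e(T)|| ; phi is continuous and the equation holds
     away from the (finitely many) partition nodes *)
  (forall i, (i < N)%nat -> cont_on_0T T (fun s => phi s i)) ->
  (forall i t, (i < N)%nat -> 0 < t < T -> ~ is_node N M tt t ->
     is_derive (fun s => phi s i) t
       (- sumR N (fun k => Jstar f (u t) (U t) t i k * phi t k))) ->
  (forall i, (i < N)%nat ->
     phi T i = (U T i - u T i) / vnorm N (vsub (U T) (u T))) ->
  (* error representation *)
  vnorm N (vsub (U T) (u T)) =
  sumR N (fun i =>
    sumR (M i) (fun j' =>
      let j := S j' in
      RInt (fun t => (Derive (fun s => U s i) t - f (U t) t i) * phi t i)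
           (tt i (j - 1)%nat) (tt i j)
      + jump_prev P tt u0 i j * phi (tt i (j - 1)%nat) i)).
Proof.
  intros HT Hb Hl HC Hu0 Huc Hud HuT Ht0 HtM Htinc HU HUr Hne Hphic Hphid HphiT.
  set (h := fun i t => (Derive (fun s => U s i) t - f (U t) t i) * phi t i).
  set (A := fun i j s => (peval (P i j) s - u s i) * phi s i).
  set (Wi := fun i s => sumR (M i) (fun j' => A i (S j') (cl (tt i j') (tt i (S j')) s) - A i (S j') (tt i j'))).
  set (W := fun s => sumR N (fun i => Wi i s)).
  set (SS := nodes N M tt).
  assert (Hmono : forall i j k, (i<N)%nat -> (j <= k)%nat -> (k <= M i)%nat -> tt i j <= tt i k)
    by (intros i j k Hi; apply part_mono; intros; apply Htinc; auto).
  assert (Hrange : forall i j, (i<N)%nat -> (j <= M i)%nat -> 0 <= tt i j <= T).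
  { intros i j Hi Hj. split. rewrite <- (Ht0 i Hi). apply Hmono; auto; lia. rewrite <- (HtM i Hi). apply Hmono; auto; lia. }
  assert (Huw : forall i, (i<N)%nat -> wc 0 T (fun s => u s i))
    by (intros; apply wcE_wc; [lra|apply cont_on_wcE; auto]).
  assert (Hphw : forall i, (i<N)%nat -> wc 0 T (fun s => phi s i))
    by (intros; apply wcE_wc; [lra|apply cont_on_wcE; auto]).
  assert (HAw : forall i j, (i<N)%nat -> wc 0 T (A i j)).
  { intros. unfold A. apply wc_mult; [apply wc_minus; [apply wc_cont; [lra| intros; apply peval_cont] | auto] | auto]. }
  assert (HWc : forall x, continuity_pt W x).
  { intros x. unfold W. apply cont_sumR. intros i Hi. unfold Wi. apply cont_sumR. intros j Hj.
    apply (continuity_pt_minus (fun s => A i (S j) (cl (tt i j) (tt i (S j)) s)) (fun _ => A i (S j) (tt i j))).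
    - destruct (Hrange i j Hi ltac:(lia)). destruct (Hrange i (S j) Hi ltac:(lia)).
      assert (tt i j < tt i (S j)) by (apply Htinc; auto).
      apply (wc_sub 0 T (tt i j) (tt i (S j)) (A i (S j))); auto; lra.
    - apply continuity_pt_const; intros ? ?; auto. }
  assert (Hcell : forall c d, 0 <= c -> c < d -> d <= T -> (forall s, In s SS -> ~ (c < s < d)) ->
     exists J : nat -> nat, forall i, (i<N)%nat -> (J i < M i)%nat /\ tt i (J i) <= c /\ d <= tt i (S (J i))).
  { intros c d Hc Hcd HdT Hn. apply (fin_choice N (fun i j => (j < M i)%nat /\ tt i j <= c /\ d <= tt i (S j))). intros i Hi. apply (part_cell (tt i) (M i) c d T); auto.
    intros j Hj. apply Hn. apply in_nodes; auto. }
  assert (HUc : forall c d J, (forall i, (i<N)%nat -> (J i < M i)%nat /\ tt i (J i) <= c /\ d <= tt i (S (J i))) ->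
     forall i t, (i<N)%nat -> c < t < d -> U t i = peval (P i (S (J i))) t).
  { intros c d J HJ i t Hi Ht. destruct (HJ i Hi) as [H1 [H2 H3]]. apply HU; auto. lia.
    replace (S (J i) - 1)%nat with (J i) by lia. lra. }
  assert (Hcellh : forall c d, 0 <= c -> c < d -> d <= T -> (forall s, In s SS -> ~ (c < s < d)) ->
     exists J : nat -> nat, (forall i, (i<N)%nat -> (J i < M i)%nat /\ tt i (J i) <= c /\ d <= tt i (S (J i))) /\
     exists G : nat -> R -> R, forall i, (i<N)%nat -> wc c d (G i) /\ forall t, c < t < d ->
        h i t = G i t /\ G i t = (dpeval (P i (S (J i))) t - f (U t) t i) * phi t i).
  { intros c d Hc Hcd HdT Hn. destruct (Hcell c d Hc Hcd HdT Hn) as [J HJ]. exists J; split; auto.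
    apply (fin_choiceF N (fun i G => wc c d G /\ forall t, c < t < d ->
        h i t = G t /\ G t = (dpeval (P i (S (J i))) t - f (U t) t i) * phi t i)). intros i Hi.
    set (Pv := fun t k => peval (P k (S (J k))) t).
    destruct (fterm_ext N T f Pv i c d Hl Hi Hc Hcd HdT) as [F [HFw HF]].
    { intros k Hk x. apply peval_cont. }
    exists (fun t => (dpeval (P i (S (J i))) t - F t) * phi t i). split.
    - apply wc_mult. apply wc_minus. apply wc_cont; [lra|intros; apply dpeval_cont]. auto.
      apply (wc_sub 0 T); auto; lra.
    - intros t Ht.
      assert (HfU : f (U t) t i = F t).
      { rewrite HF by lra. apply (f_agree N T); auto; try lra. intros k Hk. unfold Pv. apply (HUc c d J HJ); auto. }
      assert (HD : Derive (fun s => U s i) t = dpeval (P i (S (J i))) t).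
      { rewrite (Derive_ext_loc (fun s => U s i) (peval (P i (S (J i))))). apply is_derive_unique, peval_derive.
        eapply filter_imp; [|apply (locally_interval c d t Ht)]. intros s Hs. apply (HUc c d J HJ); auto. }
      split.
      + unfold h. rewrite HfU, HD. reflexivity.
      + rewrite HfU. reflexivity. }
  assert (Hint : forall i a b, (i<N)%nat -> 0 <= a -> a < b -> b <= T -> ex_RInt (h i) a b).
  { intros i a b Hi Ha Hab HbT. apply (PINT (h i) SS a b Hab). intros c d Hac Hcd Hdb Hn.
    destruct (Hcellh c d ltac:(lra) Hcd ltac:(lra) Hn) as [J [HJ [G HG]]].
    destruct (HG i Hi) as [HGw HGe]. exists (G i). split; auto. intros t Ht; apply HGe; auto. }
  assert (Hftc : is_RInt (fun t => sumR N (fun i => h i t)) 0 T (W T - W 0)).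
  { apply (PFTC W _ SS 0 T HT HWc). intros c d Hac Hcd Hdb Hn.
    destruct (Hcellh c d Hac Hcd Hdb Hn) as [J [HJ [G HG]]].
    exists (fun t => sumR N (fun i => G i t)). split.
    - apply wc_sumR. lra. intros i Hi; apply HG; auto.
    - intros t Ht. split.
      { apply sumR_ext. intros i Hi. apply HG; auto. }

      assert (Ht' : 0 < t <= T) by lra.
      assert (Hnn : ~ is_node N M tt t) by (intros Hnd; apply (Hn t (node_in _ _ _ _ Hnd)); auto).
      set (dA := fun i => (dpeval (P i (S (J i))) t - f (u t) t i) * phi t i
         + (peval (P i (S (J i))) t - u t i) * (- sumR N (fun k => Jstar f (u t) (U t) t i k * phi t k))).
      assert (HdA : forall i, (i<N)%nat -> is_derive (A i (S (J i))) t (dA i)).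
      { intros i Hi. unfold A. apply is_derive_Reals.
        eapply dpl_eq.
        apply (derivable_pt_lim_mult (fun s => peval (P i (S (J i))) s - u s i) (fun s => phi s i)).
        apply (derivable_pt_lim_minus (peval (P i (S (J i)))) (fun s => u s i)).
        apply is_derive_Reals, peval_derive. apply is_derive_Reals, Hud; auto. lra.
        apply is_derive_Reals, Hphid; auto. lra. unfold dA. ring. }
      assert (HdWi : forall i, (i<N)%nat -> is_derive (Wi i) t (dA i)).
      { intros i Hi. destruct (HJ i Hi) as [HJ1 [HJ2 HJ3]].
        replace (dA i) with (sumR (M i) (fun j => if Nat.eqb j (J i) then dA i else 0)) by (apply sumR_delta; auto).
        unfold Wi. apply is_derive_sumR. intros j Hj. destruct (Nat.eqb_spec j (J i)).
        - subst j. apply (is_derive_ext_loc (fun s => A i (S (J i)) s - A i (S (J i)) (tt i (J i)))).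
          + eapply filter_imp; [|apply (locally_interval c d t Ht)]. intros s Hs. rewrite cl_id; auto. lra.
          + apply is_derive_Reals. eapply dpl_eq.
            apply (derivable_pt_lim_minus (A i (S (J i))) (fun _ => A i (S (J i)) (tt i (J i)))).
            apply is_derive_Reals, HdA; auto. apply derivable_pt_lim_const. ring.
        - assert (Htj : tt i j < tt i (S j)) by (apply Htinc; auto).
          set (cv := if Nat.ltb j (J i) then tt i (S j) else tt i j).
          apply (is_derive_ext_loc (fun _ => A i (S j) cv - A i (S j) (tt i j))).
          + eapply filter_imp; [|apply (locally_interval c d t Ht)]. intros s Hs. unfold cv.
            destruct (Nat.ltb_spec j (J i)).
            * assert (tt i (S j) <= tt i (J i)) by (apply Hmono; auto; lia). rewrite cl_high; auto; lra.
            * assert (tt i (S (J i)) <= tt i j) by (apply Hmono; auto; lia). rewrite cl_low; auto; lra.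
          + apply (@is_derive_const R_AbsRing). }
      assert (HdW : is_derive W t (sumR N dA)) by (unfold W; apply is_derive_sumR; auto).
      replace (sumR N (fun i => G i t)) with (sumR N dA); auto.
      rewrite (sumR_ext N (fun i => G i t) (fun i => (dpeval (P i (S (J i))) t - f (U t) t i) * phi t i))
        by (intros i Hi; apply HG; auto).
      assert (Hid : sumR N (fun i => (peval (P i (S (J i))) t - u t i) * sumR N (fun k => Jstar f (u t) (U t) t i k * phi t k))
          = sumR N (fun k => phi t k * (f (U t) t k - f (u t) t k))).
      { rewrite (sumR_ext N _ (fun i => sumR N (fun k => (U t i - u t i) * Jstar f (u t) (U t) t i k * phi t k))).
        2:{ intros i Hi. rewrite <- sumR_scal. rewrite <- (HUc c d J HJ i t Hi Ht). apply sumR_ext; intros; ring. }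
        rewrite sumR_swap. apply sumR_ext. intros k Hk. rewrite (mvt_vec N T f t (u t) (U t) k Hl HC Ht' Hk).
        rewrite <- sumR_scal. apply sumR_ext; intros; ring. }
      unfold dA. rewrite (sumR_ext N _ (fun i => (dpeval (P i (S (J i))) t - f (u t) t i) * phi t i
          - (peval (P i (S (J i))) t - u t i) * sumR N (fun k => Jstar f (u t) (U t) t i k * phi t k))) by (intros; ring).
      rewrite sumR_minus, Hid, <- sumR_minus. apply sumR_ext. intros; ring. }
  assert (HMpos : forall i, (i<N)%nat -> (0 < M i)%nat).
  { intros i Hi. destruct (M i) eqn:E; [|lia]. exfalso. pose proof (HtM i Hi). pose proof (Ht0 i Hi).
    rewrite E in *. lra. }
  assert (Hex : forall i j, (i<N)%nat -> (j < M i)%nat -> ex_RInt (h i) (tt i j) (tt i (S j))).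
  { intros i j Hi Hj. destruct (Hrange i j Hi ltac:(lia)). destruct (Hrange i (S j) Hi ltac:(lia)).
    assert (tt i j < tt i (S j)) by (apply Htinc; auto). apply Hint; auto; lra. }
  assert (HRi : forall i, (i<N)%nat -> sumR (M i) (fun j' => RInt (h i) (tt i j') (tt i (S j'))) = RInt (h i) 0 T).
  { intros i Hi. symmetry. apply is_RInt_unique. assert (E := RInt_partition (h i) (tt i) (M i) (fun j Hj => Hex i j Hi Hj)).
    rewrite Ht0, HtM in E by auto. exact E. }
  assert (Hsum : sumR N (fun i => RInt (h i) 0 T) = W T - W 0).
  { assert (H1 : is_RInt (fun t => sumR N (fun i => h i t)) 0 T (sumR N (fun i => RInt (h i) 0 T))).
    { apply is_RInt_sumR. intros i Hi. apply Hint; auto; lra. }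
    rewrite <- (is_RInt_unique _ _ _ _ H1). apply is_RInt_unique. exact Hftc. }
  assert (HWT : W T = sumR N (fun i => sumR (M i) (fun j => A i (S j) (tt i (S j)) - A i (S j) (tt i j)))).
  { unfold W, Wi. apply sumR_ext. intros i Hi. apply sumR_ext. intros j Hj.
    destruct (Hrange i (S j) Hi ltac:(lia)). assert (tt i j < tt i (S j)) by (apply Htinc; auto).
    rewrite cl_high; auto; lra. }
  assert (HW0 : W 0 = 0).
  { unfold W, Wi. transitivity (sumR N (fun _ => 0)); [|apply sumR_zero]. apply sumR_ext. intros i Hi.
    transitivity (sumR (M i) (fun _ => 0)); [|apply sumR_zero]. apply sumR_ext. intros j Hj.
    destruct (Hrange i j Hi ltac:(lia)). assert (tt i j < tt i (S j)) by (apply Htinc; auto).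
    rewrite cl_low; [ring|lra|lra]. }
  set (n := vnorm N (vsub (U T) (u T))).
  assert (Hpi : forall i, (i<N)%nat ->
     sumR (M i) (fun j => A i (S j) (tt i (S j)) - A i (S j) (tt i j))
     + sumR (M i) (fun j' => jump_prev P tt u0 i (S j') * phi (tt i j') i) = (U T i - u T i) * phi T i).
  { intros i Hi. rewrite <- sumR_plus.
    set (Fi := fun j => match j with O => 0 | S _ => A i j (tt i j) end).
    rewrite (sumR_ext (M i) _ (fun j => Fi (S j) - Fi j)).
    - rewrite sumR_telescope. unfold Fi. destruct (M i) eqn:EM; [specialize (HMpos i Hi); lia|].
      rewrite <- EM. unfold A. rewrite (HtM i Hi). rewrite (HU i (M i) T Hi); [ring|lia|].
      rewrite EM. replace (S n0 - 1)%nat with n0 by lia. split; [|rewrite <- EM, (HtM i Hi); lra].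
      rewrite <- (HtM i Hi), EM. apply Htinc; auto; lia.
    - intros j Hj. unfold jump_prev, Fi, A. replace (S j - 1)%nat with j by lia. destruct j.
      + simpl. rewrite (Ht0 i Hi), (Hu0 i Hi). ring.
      + simpl Nat.eqb. cbv iota. ring. }
  transitivity (sumR N (fun i => (U T i - u T i) * phi T i)).
  { rewrite (sumR_ext N _ (fun i => / n * ((U T i - u T i) ^ 2))).
    2:{ intros i Hi. rewrite HphiT by auto. fold n. unfold Rdiv. ring. }
    rewrite sumR_scal. fold n in Hne.
    assert (En : n * n = sumR N (fun i => (U T i - u T i) ^ 2)).
    { unfold n, vnorm. rewrite sqrt_sqrt. reflexivity. apply sumR_nonneg. intros; apply pow2_ge_0. }
    rewrite <- En. field. auto. }
  transitivity (sumR N (fun i => sumR (M i) (fun j => A i (S j) (tt i (S j)) - A i (S j) (tt i j))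
     + sumR (M i) (fun j' => jump_prev P tt u0 i (S j') * phi (tt i j') i))).
  { apply sumR_ext. intros i Hi. symmetry. apply Hpi; auto. }
  rewrite sumR_plus, <- HWT.
  replace (W T) with (W T - W 0) by (rewrite HW0; ring). rewrite <- Hsum.
  rewrite <- (sumR_ext N _ _ HRi). rewrite <- sumR_plus. apply sumR_ext. intros i Hi.
  rewrite <- sumR_plus. apply sumR_ext. intros j Hj. cbv zeta. replace (S j - 1)%nat with j by lia. reflexivity.
Qed.
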